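(* Let $M'=M[D,K]$ be a compatible minor of the weighted uncertainty matroid $\mathcal{M}$. Let $e$ be a non-trivial element of $M'$ such that (i) $e\in B$ for some minimum-weight basis $B$ of $M'$, (ii) $w_e=U_e$, (iii) $e$ has minimum weight in $E(M')\setminus\mathrm{span}_{M'}(B\setminus\{e\})$, and (iv) $e$ has maximum query cost in $(E(M')\setminus\mathrm{span}_{M'}(B\setminus\{e\}))\cap E^U_{w_e}$. Then $M[D,K\cup\{e\}]$ is a compatible minor of $\mathcal{M}$.
   Context: A weighted uncertainty matroid $\mathcal{M}=(E,\mathcal{I},A,w)$ consists of a matroid $M=(E,\mathcal{I})$ on a finite set $E$, for each $e\in E$ a non-empty finite union $A_e$ of bounded real intervals (each open or closed), a weight $w_e\in A_e$, and a query cost $c_e\ge0$. $L_e=\inf A_e$, $U_e=\sup A_e$; $e$ is trivial if $A_e=\{w_e\}$. For a real $x$, $E^U_x=\{e\in E: U_e=x \text{ and } e \text{ non-trivial}\}$. A minimum-weight basis (MWB) is a basis minimizing total weight. A weight assignment is $w^*$ with $w^*_e\in A_e$, consistent with $Q$ if $w^*_e=w_e$ on $Q$. $Q$ verifies an MWB $B$ if for every weight assignment consistent with $Q$, $B$ is an MWB with respect to it; a certificate for $\mathcal{M}$ is a set verifying some MWB, and $c^*$ denotes the minimum cost $\sum_{e\in Q}c_e$ of a certificate for $\mathcal{M}$. For $D,K\subseteq E$, $M[D,K]$ is the matroid obtained from $M$ by deleting $D$ and contracting $K$, ground set $E(M[D,K])=E\setminus(D\cup K)$, weights restricted. $M[D,K]$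 is a compatible minor if there is a set $Q$ of cost $c^*$ verifying an MWB $B$ of $\mathcal{M}$ with $K\subseteq B$, $D\cap B=\emptyset$. $\mathrm{span}_N(X)=\{e: r_N(X\cup\{e\})=r_N(X)\}$. *)

(* Defs.v *)
From HB Require Import structures.
From mathcomp Require Import all_boot all_order all_algebra.
From mathcomp Require Import boolp classical_sets reals.
Set Implicit Arguments. Unset Strict Implicit. Unset Printing Implicit Defensive.
Import Order.TTheory GRing.Theory Num.Theory.
Local Open Scope ring_scope.

Record matroid (T : finType) := Matroid {
  indep : {set T} -> bool;
  indep0 : indep finset.set0;
  indep_sub : forall A B : {set T}, A \subset B -> indep B -> indep A;
  indep_exch : forall A B : {set T}, indep A -> indep B -> (#|A| < #|B|)%N ->
     exists2 x, x \in B :\: A & indep (x |: A)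
}.

Section MatroidDefs.
Variables (T : finType) (M : matroid T).

Definition rank (X : {set T}) : nat :=
  \max_(Y : {set T} | (Y \subset X) && indep M Y) #|Y|.

(* The minor M[D,K] = M \ D / K: ground set E \ (D u K), rank
   r_{M[D,K]}(X) = r_M(X u K) - r_M(K). *)
Definition mground (D K : {set T}) : {set T} := ~: (D :|: K).
Definition mrank (D K X : {set T}) : nat := (rank (X :|: K) - rank K)%N.
Definition mindep (D K I : {set T}) : bool :=
  (I \subset mground D K) && (mrank D K I == #|I|)%N.
Definition mbasis (D K B : {set T}) : Prop :=
  mindep D K B /\
  forall x, x \in mground D K -> x \notin B -> ~~ mindep D K (x |: B).
Definition mspan (D K X : {set T}) : {set T} :=
  [set e | mrank D K (e |: X) == mrank D K X].
End MatroidDefs.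

Definition in_itv (R : realType) (I : R * R * bool) (x : R) : Prop :=
  let: (lo, hi, closed) := I in
  if closed then lo <= x <= hi else lo < x < hi.

Definition uset (R : realType) (s : seq (R * R * bool)) : set R :=
  fun x => exists2 I, I \in s & in_itv I x.

Record umatroid (R : realType) (T : finType) := UMatroid {
  mat : matroid T;
  unc : T -> seq (R * R * bool);
  wt : T -> R;
  cost : T -> R;
  unc_nonempty : forall e, exists x, uset (unc e) x;
  wt_in : forall e, uset (unc e) (wt e);
  cost_ge0 : forall e, 0 <= cost e
}.

Section UDefs.
Variables (R : realType) (T : finType) (UM : umatroid R T).
Let M := mat UM.
Let w := wt UM.
Definition Aset (e : T) : set R := uset (unc UM e).
Definition Lo (e : T) : R := inf (Aset e).
Definition Up (e : T) : R := sup (Aset e).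
Definition trivial_elt (e : T) : Prop := forall x, Aset e x <-> x = w e.

Definition setw (w' : T -> R) (B : {set T}) : R := \sum_(f in B) w' f.

Definition MWB_minor (w' : T -> R) (D K B : {set T}) : Prop :=
  mbasis M D K B /\
  forall B', mbasis M D K B' -> setw w' B <= setw w' B'.
Definition MWB (w' : T -> R) (B : {set T}) : Prop := MWB_minor w' finset.set0 finset.set0 B.

Definition weight_assignment (w' : T -> R) : Prop := forall e, Aset e (w' e).
Definition consistent (Q : {set T}) (w' : T -> R) : Prop :=
  weight_assignment w' /\ forall e, e \in Q -> w' e = w e.
Definition verifies (Q B : {set T}) : Prop :=
  forall w', consistent Q w' -> MWB w' B.
Definition certificate (Q : {set T}) : Prop := exists B, verifies Q B.
Definition qcost (Q : {set T}) : R := \sum_(f in Q) cost UM f.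

Definition compatible_minor (D K : {set T}) : Prop :=
  exists Q B,
    certificate Q /\ (forall Q', certificate Q' -> qcost Q <= qcost Q') /\
    verifies Q B /\ K \subset B /\ [disjoint D & B].
End UDefs.

(* Main.v *)
Require Import Defs.
From HB Require Import structures.
From mathcomp Require Import all_boot all_order all_algebra.
From mathcomp Require boolp classical_sets reals.
From mathcomp Require Import zify lra.

Import Order.TTheory GRing.Theory Num.Theory.
Local Open Scope ring_scope.

Set Implicit Arguments. Unset Strict Implicit.
Section Mat.
Variables (T : finType) (M : matroid T).
Implicit Types (X Y Z I J B Bs : {set T}).

Lemma rank_le X : (rank M X <= #|X|)%N.
Proof. by rewrite /rank; apply/bigmax_leqP => Y /andP [sYX _]; exact: subset_leq_card. Qed.

Lemma rank_ge X Y : Y \subset X -> indep M Y -> (#|Y| <= rank M X)%N.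
Proof.
move=> sYX iY; rewrite /rank.
apply: (@leq_bigmax_cond _ (fun Y : {set T} => (Y \subset X) && indep M Y) (fun Y => #|Y|) Y).
by rewrite sYX iY.
Qed.

Lemma rank_indep X : indep M X -> rank M X = #|X|.
Proof. by move=> iX; apply/eqP; rewrite eqn_leq rank_le rank_ge. Qed.

Lemma rank_eq X : rank M X = #|X| -> indep M X.
Proof.
move=> h; apply/negPn/negP => nX.
have : (rank M X <= #|X|.-1)%N.
  rewrite /rank; apply/bigmax_leqP => Y /andP [sYX iY].
  have nYX : Y != X by apply: contraNneq nX => <-.
  have : Y \proper X by rewrite finset.properEneq nYX sYX.
  move/proper_card; lia.
rewrite h => h2.
have X0 : #|X| = 0%N by lia.
move/eqP: X0; rewrite cards_eq0 => /eqP X0.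
by move: nX; rewrite X0 indep0.
Qed.

Lemma aug_bound J Y I : indep M J ->
  (forall y, y \in Y -> (y \in J) || ~~ indep M (y |: J)) ->
  I \subset J :|: Y -> indep M I -> (#|I| <= #|J|)%N.
Proof.
move=> iJ HY sI iI; rewrite leqNgt; apply/negP => lt.
have [x /setDP [xI xJ] ind] := indep_exch iJ iI lt.
have : x \in J :|: Y by exact: (subsetP sI).
rewrite in_setU (negbTE xJ) /= => xY.
by move: (HY x xY); rewrite (negbTE xJ) ind.
Qed.

Lemma max_ext X Y : X \subset Y -> indep M X -> exists Z,
  [/\ X \subset Z, Z \subset Y, indep M Z &
      forall I, I \subset Y -> indep M I -> (#|I| <= #|Z|)%N].
Proof.
move=> sXY iX.
pose P Z := [&& X \subset Z, Z \subset Y & indep M Z].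
have PX : P X by rewrite /P subxx sXY iX.
case: (arg_maxnP (fun Z => #|Z|) PX) => Z /and3P [sXZ sZY iZ] maxZ.
exists Z; split=> // I sIY iI; rewrite leqNgt; apply/negP => lt.
have [x /setDP [xI xZ] ind] := indep_exch iZ iI lt.
have : P (x |: Z).
  rewrite /P ind (subset_trans sXZ (subsetUr _ _)) subUset sub1set.
  by rewrite (subsetP sIY _ xI) sZY.
by move/maxZ; rewrite cardsU1 xZ; clear -lt; lia.
Qed.

Lemma basis_bound B I : indep M B ->
  (forall x, x \notin B -> ~~ indep M (x |: B)) -> indep M I -> (#|I| <= #|B|)%N.
Proof.
move=> iB mB iI; apply: (@aug_bound B setT) => //; last by rewrite setUT subsetT.
by move=> y _; case: (boolP (y \in B)) => //= yB; exact: mB.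
Qed.

Lemma find_f Bs (I0 : {set T}) e : indep M Bs ->
  (forall x, x \notin Bs -> ~~ indep M (x |: Bs)) ->
  indep M (e |: I0) -> e \notin I0 -> e \notin Bs ->
  exists f, [/\ f \in Bs, f \notin I0, indep M (f |: I0) &
             indep M (e |: (Bs :\ f))].
Proof.
move=> iBs mBs iI1 eI0 eBs.
have iI0 : indep M I0 by apply: indep_sub iI1; exact: subsetUr.
pose S := [set x in Bs | (x \in I0) || ~~ indep M (x |: I0)].
have sSB : S \subset Bs by apply/subsetP => x; rewrite inE => /andP [].
have iS : indep M S := indep_sub sSB iBs.
have sS1 : S \subset e |: (S :|: I0).
  by apply: subset_trans (subsetUl _ _) (subsetUr _ _).
have [Z [sSZ sZY iZ maxZ]] := max_ext sS1 iS.
have eZ : e \in Z.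
  apply/negPn/negP => eZ.
  have h1 : (#|e |: I0| <= #|Z|)%N.
    apply: maxZ => //; rewrite setUCA; exact: subsetUr.
  have h2 : (#|Z| <= #|I0|)%N.
    apply: (@aug_bound I0 S) => //.
      by move=> y; rewrite inE => /andP [].
    apply/subsetP => x xZ; have := subsetP sZY x xZ.
    rewrite !inE; case: eqP => [xe|_] /=; first by move: eZ; rewrite -xe xZ.
    by rewrite orbC.
  by move: h1; rewrite cardsU1 eI0 add1n => h1; clear -h1 h2; lia.
have iSe : indep M (e |: S) by apply: indep_sub iZ; rewrite subUset sub1set eZ sSZ.
have sS2 : e |: S \subset e |: Bs by rewrite setUS.
have [Z' [sSZ' sZ'Y iZ' maxZ']] := max_ext sS2 iSe.
have c1 : (#|Bs| <= #|Z'|)%N by apply: maxZ' => //; exact: subsetUr.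
have c2 : (#|Z'| <= #|Bs|)%N by exact: basis_bound.
have eZ' : e \in Z' by apply: (subsetP sSZ'); exact: setU11.
set Z0 := Z' :\ e.
have sZ0 : Z0 \subset Bs.
  apply/subsetP => x; rewrite in_setD1 => /andP [xe xZ'].
  by have := subsetP sZ'Y x xZ'; rewrite in_setU1 (negbTE xe).
have cZ0 : #|Z'| = (#|Z0| + 1)%N by rewrite (cardsD1 e Z') eZ' addnC.
have : #|Bs :\: Z0| == 1%N.
  by rewrite cardsD (setIidPr sZ0); apply/eqP; clear -c1 c2 cZ0; lia.
case/cards1P => f hf.
have fD : f \in Bs :\: Z0 by rewrite hf set11.
move: (fD); rewrite inE => /andP [fZ0 fBs].
have BZ : Bs :\ f = Z0.
  apply/setP => x; rewrite in_setD1; apply/idP/idP.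
    case/andP => xf xB; apply/negPn/negP => xZ.
    have : x \in Bs :\: Z0 by rewrite inE xZ xB.
    by rewrite hf in_set1 (negbTE xf).
  move=> xZ; rewrite (subsetP sZ0 _ xZ) andbT.
  by apply/eqP => xf; move: fZ0; rewrite -xf xZ.
have fS : f \notin S.
  apply/negP => fS; have := subsetP sSZ' f (setU1r _ fS).
  rewrite -(setD1K eZ') in_setU1 -/Z0 (negbTE fZ0) orbF => /eqP fe.
  by move: eBs; rewrite -fe fBs.
move: fS; rewrite inE fBs /= negb_or negbK => /andP [fI0 ifI0].
exists f; split => //.
by rewrite BZ /Z0 setD1K.
Qed.

Lemma mindep0 X : mindep M set0 set0 X = indep M X.
Proof.
rewrite /mindep /mground /mrank !setU0 setC0 subsetT /=.
rewrite (rank_indep (indep0 M)) cards0 subn0.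
by apply/eqP/idP => [/rank_eq|/rank_indep].
Qed.

End Mat.

From mathcomp Require Import reals.
Section Real.
Variables (R : realType) (T : finType) (UM : umatroid R T).

Definition ubs (s : seq (R * R * bool)) : R :=
  foldr (fun I m => Num.max I.1.2 m) 0 s.

Lemma ubs_ge s I : I \in s -> I.1.2 <= ubs s.
Proof.
elim: s => //= J s IH; rewrite in_cons => /orP [/eqP ->|/IH h].
  by rewrite le_max lexx.
by rewrite le_max h orbT.
Qed.

Lemma Aset_ub e : classical_sets.has_ubound (Aset UM e).
Proof.
exists (ubs (unc UM e)) => x [I Is hI].
apply: le_trans (ubs_ge Is).
by move: hI; case: I {Is} => [[lo hi] []] /= /andP [_ h] //; exact: ltW.
Qed.

Lemma Up_ge e x : Aset UM e x -> x <= Up UM e.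
Proof. by move=> Ax; apply: (reals.ub_le_sup (Aset_ub e)). Qed.

Lemma Up_le e m : (forall x, Aset UM e x -> x <= m) -> Up UM e <= m.
Proof. by move=> h; apply: reals.ge_sup => //; exists (wt UM e); exact: wt_in. Qed.

End Real.

Unset Implicit Arguments. Set Strict Implicit.
Theorem lemma17 (R : realType) (T : finType) (UM : umatroid R T)
    (D K B : {set T}) (e : T) :
  compatible_minor UM D K ->
  e \in mground D K ->
  ~ trivial_elt UM e ->
  (* (i) *)
  MWB_minor UM (wt UM) D K B -> e \in B ->
  (* (ii) *)
  wt UM e = Up UM e ->
  (* (iii) *)
  e \in mground D K :\: mspan (mat UM) D K (B :\ e) ->
  (forall f, f \in mground D K :\: mspan (mat UM) D K (B :\ e) ->
     wt UM e <= wt UM f) ->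
  (* (iv) : f in (E(M') \ span(B - e)) n E^U_{w_e} *)
  (forall f, f \in mground D K :\: mspan (mat UM) D K (B :\ e) ->
     Up UM f = wt UM e -> ~ trivial_elt UM f ->
     cost UM f <= cost UM e) ->
  compatible_minor UM D (e |: K).
Proof.
move=> [Qs [Bs [certQ [minQ [verQ [sKB dDB]]]]]] eG ntriv [[bB _] _] eB wU eDe eMin eCost.
have [eBs | eBs] := boolP (e \in Bs).
  exists Qs, Bs; split=> //; split=> //; split=> //; split => //.
  by rewrite subUset sub1set eBs sKB.
set w := wt UM.
have cw : consistent UM Qs w by split => //; exact: wt_in.
have MWBs := verQ w cw.
have [[mBs maxBs] _] := MWBs.
rewrite mindep0 in mBs.
have maxBs' : forall x, x \notin Bs -> ~~ indep (mat UM) (x |: Bs).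
  move=> x xB; rewrite -mindep0; apply: maxBs => //.
  by rewrite /mground setU0 setC0 inE.
have iK : indep (mat UM) K := indep_sub sKB mBs.
have eK : e \notin K by move: eG; rewrite /mground !inE negb_or => /andP [].
set I0 := (B :\ e) :|: K.
have BKd : forall x, x \in B -> x \notin K.
  move=> x xB; move/andP: bB => [sB _]; have := subsetP sB x xB.
  by rewrite /mground !inE negb_or => /andP [].
have iBK : indep (mat UM) (B :|: K).
  move/andP: bB => [_ /eqP]; rewrite /mrank (rank_indep iK) => h.
  apply: rank_eq.
  have h1 : (#|K| <= rank (mat UM) (B :|: K))%N by apply: rank_ge => //; exact: subsetUr.
  have h2 : #|B :|: K| = (#|B| + #|K|)%N.
    rewrite cardsU; suff -> : B :&: K = set0 by rewrite cards0 subn0.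
    apply/setP => x; rewrite !inE; case: (boolP (x \in B)) => //= xB.
    by rewrite (negbTE (BKd x xB)).
  rewrite h2; clear -h h1; lia.
have eI1 : e |: I0 = B :|: K by rewrite /I0 setUA setD1K.
have eI0 : e \notin I0 by rewrite /I0 !inE eqxx /= (negbTE eK).
have iI1 : indep (mat UM) (e |: I0) by rewrite eI1.
have [f [fBs fI0 ifI0 iB2]] := find_f mBs maxBs' iI1 eI0 eBs.
set B2 := e |: (Bs :\ f).
have fe : f != e by apply: contraNneq eBs => <-.
have fK : f \notin K by apply: contra fI0 => fK; rewrite /I0 inE fK orbT.
have fDn : f \notin D.
  by apply/negP => fD; move: dDB; rewrite -setI_eq0 => /eqP/setP/(_ f); rewrite !inE fD fBs.
have fG : f \in mground D K :\: mspan (mat UM) D K (B :\ e).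
  rewrite inE /mground !inE negb_or fDn fK andbT /mrank -setUA -/I0.
  rewrite (rank_indep ifI0) (rank_indep (indep_sub (subsetUr _ _) iI1)).
  rewrite (rank_indep iK) cardsU1 fI0.
  have : (#|K| <= #|I0|)%N by apply: subset_leq_card; exact: subsetUr.
  by move=> h; apply/negP => /eqP; clear -h; lia.
have eB2 : e \notin Bs :\ f by rewrite in_setD1 (negbTE eBs) andbF.
have cB2 : #|B2| = #|Bs|.
  by rewrite /B2 cardsU1 eB2 (cardsD1 f Bs) fBs.
have basis2 : mbasis (mat UM) set0 set0 B2.
  split; first by rewrite mindep0.
  move=> x _ xB2; rewrite mindep0; apply/negP => ix.
  have := basis_bound mBs maxBs' ix; rewrite cardsU1 xB2 cB2; clear; lia.
have keyw : forall w', MWB UM w' Bs -> w' f <= w' e.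
  move=> w' [_ H]; have := H B2 basis2.
  by rewrite /setw (big_setD1 _ fBs) big_setU1 //= lerD2r.
have [x [Ax xlt]] : exists x, Aset UM e x /\ x < w e.
  have [x [Ax xn]] : exists x, Aset UM e x /\ x != w e.
    apply: boolp.contrapT => H; apply: ntriv => x; split => [Ax|->]; last exact: wt_in.
    by apply/eqP/negPn/negP => nx; apply: H; exists x.
  exists x; split => //; rewrite lt_neqAle xn /= /w wU; exact: Up_ge.
have eQ : e \in Qs.
  apply/negPn/negP => eQ.
  pose w' := fun y => if y == e then x else w y.
  have c : consistent UM Qs w'.
    split => y; rewrite /w'; case: eqP => [->|_] //; try exact: wt_in.
    by move=> yQ; move: eQ; rewrite yQ.
  have := keyw w' (verQ w' c); rewrite /w' eqxx (negbTE fe).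
  have := eMin f fG; rewrite -/w => h1 h2; lra.
have wfe : w f = w e by have := keyw w MWBs; have := eMin f fG; rewrite -/w => h1 h2; lra.
have sKB2 : e |: K \subset B2.
  rewrite subUset sub1set setU11 /=; apply/subsetP => y yK.
  rewrite /B2 !inE (subsetP sKB y yK) andbT; apply/orP; right.
  by apply: contraNneq fK => <-.
have dDB2 : [disjoint D & B2].
  rewrite -setI_eq0; apply/eqP/setP => y; rewrite !inE.
  case: (boolP (y \in D)) => //= yD; apply/negP => /orP [/eqP ye|/andP [_ yB]].
    by move: eG; rewrite -ye /mground !inE yD.
  by move: dDB; rewrite -setI_eq0 => /eqP/setP/(_ y); rewrite !inE yD yB.
have caseA : (forall w', consistent UM Qs w' -> w' f = w f) ->
    compatible_minor UM D (e |: K).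
  move=> H; exists Qs, B2; split => //; split => //; split => //.
  move=> w' c; split => // B' bB'.
  have [_ mw] := verQ w' c.
  move: (mw B' bB'); rewrite /setw (big_setD1 _ fBs) big_setU1 //= H //.
  by rewrite (c.2 e eQ) -/w wfe.
case: (boolP (f \in Qs)) => fQ.
  by apply: caseA => w' c; exact: (c.2 f fQ).
case: (boolp.pselect (trivial_elt UM f)) => ntf.
  apply: caseA => w' c; apply/(ntf (w' f)); exact: c.1.
have Upf : Up UM f = w e.
  apply/eqP; rewrite eq_le; apply/andP; split.
    apply: Up_le => a Aa.
    pose w' := fun y => if y == f then a else w y.
    have c : consistent UM Qs w'.
      split => y; rewrite /w'; case: eqP => [->|_] //; try exact: wt_in.
      by move=> yQ; move: fQ; rewrite yQ.
    by have := keyw w' (verQ w' c); rewrite /w' eqxx eq_sym (negbTE fe).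
  by rewrite -wfe; apply: Up_ge; exact: wt_in.
have cfe := eCost f fG Upf ntf.
set Q2 := f |: (Qs :\ e).
have fQe : f \notin Qs :\ e by rewrite in_setD1 (negbTE fQ) andbF.
have cQ : qcost UM Q2 <= qcost UM Qs.
  by rewrite /qcost big_setU1 //= (big_setD1 _ eQ) /= lerD2r.
have verQ2 : verifies UM Q2 B2.
  move=> w' [wa cw'].
  pose w'' := fun y => if y == e then w e else w' y.
  have c'' : consistent UM Qs w''.
    split => y; rewrite /w''; case: eqP => [->|ye] //; first exact: wt_in.
    move=> yQ; apply: cw'. rewrite /Q2 !inE yQ andbT; apply/orP; right; apply/eqP. exact: ye.
  have [_ mw] := verQ w'' c''.
  split => // B' bB'.
  have h1 := mw B' bB'.
  have wf : w' f = w f by apply: cw'; exact: setU11.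
  have we : w' e <= w e by rewrite /w wU; exact: Up_ge.
  have eq1 : setw w'' Bs = w f + \sum_(y in Bs :\ f) w' y.
    rewrite /setw (big_setD1 _ fBs) /w'' (negbTE fe) wf; congr (_ + _).
    apply: eq_bigr => y; rewrite in_setD1 => /andP [_ yB].
    by case: eqP => // ye; move: eBs; rewrite -ye yB.
  have eq2 : setw w' B2 = w' e + \sum_(y in Bs :\ f) w' y.
    by rewrite /setw big_setU1.
  have eq3 : setw w'' B' <= setw w' B' + (w e - w' e).
    case: (boolP (e \in B')) => eB'.
      rewrite /setw (big_setD1 _ eB') (big_setD1 (F := w') _ eB') /w'' eqxx.
      have -> : \sum_(i in B' :\ e) (if i == e then w e else w' i) =
                \sum_(i in B' :\ e) w' i.
        by apply: eq_bigr => y; rewrite in_setD1 => /andP [/negbTE -> _].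
      rewrite /=; lra.
    have -> : setw w'' B' = setw w' B'.
      apply: eq_bigr => y yB; rewrite /w''; case: eqP => // ye.
      by move: eB'; rewrite -ye yB.
    lra.
  rewrite eq2; move: h1; rewrite eq1 wfe; lra.
exists Q2, B2; split; first by exists B2.
split; first by move=> Q' cQ'; apply: le_trans cQ (minQ Q' cQ').
by split.
Qed.
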